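(* Let $m,d_1,d_2$ be positive integers, $\bm{B}\in\mathbb{C}^{m\times d_1}$, $\bm{A}\in\mathbb{C}^{m\times d_2}$ and $\bm{y}\in\mathbb{C}^m$. For $j=1,\dots,m$ let $\bm{b}_j\in\mathbb{C}^{d_1}$ and $\bm{a}_j\in\mathbb{C}^{d_2}$ be the $j$-th columns of $\bm{B}^{\mathsf H}$ and $\bm{A}^{\mathsf H}$ respectively. Define $F_1:\mathbb{R}^{d_1}\times\mathbb{R}^{d_2}\to\mathbb{R}$ by $$F_1(\bm{h},\bm{x})=\frac14\|\bm{Bh}\|_4^4+\frac14\|\bm{Ax}\|_4^4+\frac12\Big(\|\bm{Bh}\odot\bm{Ax}\|_2^2+\|\bm{y}\odot\bm{Bh}\|_2^2+\|\bm{Ax}\|_2^2+\|\bm{y}\|_2^2\Big),$$ and $H:\mathbb{R}^{d_1}\times\mathbb{R}^{d_2}\to\mathbb{R}$ by $$H(\bm{h},\bm{x})=\frac14\big(\|\bm{h}\|_2^2+\|\bm{x}\|_2^2\big)^2+\frac12\big(\|\bm{h}\|_2^2+\|\bm{x}\|_2^2\big).$$ Then for every real $L$ satisfying $$L\ \ge\ \sum_{j=1}^m\Big(3\|\bm{b}_j\|_2^4+3\|\bm{a}_j\|_2^4+\|\bm{b}_j\|_2^2\|\bm{a}_j\|_2^2+|y_j|^2\|\bm{b}_j\|_2^2+\|\bm{a}_j\|_2^2\Big),$$ the function $LH-F_1$ is convex on $\mathbb{R}^{d_1+d_2}$.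
   Context: $\odot$ denotes the elementwise (Hadamard) product of vectors in $\mathbb{C}^m$; for $\bm{w}\in\mathbb{C}^m$, $\|\bm{w}\|_2^2=\sum_j|w_j|^2$ and $\|\bm{w}\|_4^4=\sum_j|w_j|^4$. $\bm{B}^{\mathsf H}$ is the conjugate transpose, so $(\bm{Bh})_j=\bm{b}_j^{\mathsf H}\bm{h}$ and $(\bm{Ax})_j=\bm{a}_j^{\mathsf H}\bm{x}$. The variables $\bm{h},\bm{x}$ are real vectors, and $(\bm{h},\bm{x})$ is identified with a vector of $\mathbb{R}^{d_1+d_2}$. *)

(* Defs.v *)
From HB Require Import structures.
From mathcomp Require Import all_boot all_order all_algebra.
From mathcomp Require Import complex.
Set Implicit Arguments. Unset Strict Implicit. Unset Printing Implicit Defensive.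
Import Order.TTheory GRing.Theory Num.Theory.
Local Open Scope ring_scope.
Local Open Scope complex_scope.

Definition abs2 (R : rcfType) (z : R[i]) : R := (complex.Re z) ^+ 2 + (complex.Im z) ^+ 2.

Definition embed (R : rcfType) n (h : 'cV[R]_n) : 'cV[R[i]]_n :=
  map_mx (fun r => r%:C) h.

Definition cnorm2 (R : rcfType) n (w : 'cV[R[i]]_n) : R :=
  \sum_(j < n) abs2 (w j 0).
Definition cnorm4 (R : rcfType) n (w : 'cV[R[i]]_n) : R :=
  \sum_(j < n) (abs2 (w j 0)) ^+ 2.

Definition hadamard (R : rcfType) n (u v : 'cV[R[i]]_n) : 'cV[R[i]]_n :=
  \col_j (u j 0 * v j 0).

Definition rnorm2 (R : rcfType) n (h : 'cV[R]_n) : R := \sum_(j < n) (h j 0) ^+ 2.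

Definition adjoint (R : rcfType) m n (B : 'M[R[i]]_(m, n)) : 'M[R[i]]_(n, m) :=
  (map_mx (@conjc R) B)^T.

Definition F1 (R : rcfType) m d1 d2 (B : 'M[R[i]]_(m, d1)) (A : 'M[R[i]]_(m, d2))
  (y : 'cV[R[i]]_m) (h : 'cV[R]_d1) (x : 'cV[R]_d2) : R :=
  let Bh := B *m embed h in
  let Ax := A *m embed x in
  4^-1 * cnorm4 Bh + 4^-1 * cnorm4 Ax
  + 2^-1 * (cnorm2 (hadamard Bh Ax) + cnorm2 (hadamard y Bh) + cnorm2 Ax + cnorm2 y).

Definition Hfun (R : rcfType) d1 d2 (h : 'cV[R]_d1) (x : 'cV[R]_d2) : R :=
  4^-1 * (rnorm2 h + rnorm2 x) ^+ 2 + 2^-1 * (rnorm2 h + rnorm2 x).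

(* convexity of G on R^{d1} x R^{d2} = R^{d1+d2} *)
Definition convex_on_pairs (R : rcfType) d1 d2 (G : 'cV[R]_d1 -> 'cV[R]_d2 -> R) :=
  forall (h1 h2 : 'cV[R]_d1) (x1 x2 : 'cV[R]_d2) (t : R), 0 <= t -> t <= 1 ->
    G (t *: h1 + (1 - t) *: h2) (t *: x1 + (1 - t) *: x2)
      <= t * G h1 x1 + (1 - t) * G h2 x2.

(* Main.v *)
Require Import Defs.
From HB Require Import structures.
From mathcomp Require Import all_boot all_order all_algebra.
From mathcomp Require Import complex.
From mathcomp Require Import ring lra.
Import Order.TTheory GRing.Theory Num.Theory.
Local Open Scope ring_scope.
Local Open Scope complex_scope.

Lemma hess (R : rcfType) (K y2 al be Nh Nx bh bx ch cx U V bu bv cu cv : R) :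
 0 <= Nh -> 0 <= Nx -> 0 <= ch -> 0 <= cx -> 0 <= U -> 0 <= V -> 0 <= cu -> 0 <= cv ->
 U <= be*Nh -> V <= al*Nx -> cu <= be*ch -> cv <= al*cx -> bu^+2 <= U*cu -> bv^+2 <= V*cv ->
 0 <= al -> 0 <= be -> 0 <= y2 -> 3*be^+2+3*al^+2+al*be+y2*be+al <= K ->
 0 <= K*((bh+bx)^+2 + (Nh+Nx)*(ch+cx)/2 + (ch+cx)/2) - (bu^+2 + U*cu/2 + bv^+2 + V*cv/2 + (cu*V+U*cv)/2 + 2*bu*bv + y2*cu/2 + cv/2).
Proof.
move=> Nh0 Nx0 ch0 cx0 U0 V0 cu0 cv0 hU hV hcu hcv hbu hbv al0 be0 y0 hK.
have e1 : 2*bu*bv <= cu*V + U*cv.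
  have : (2*bu*bv)^+2 <= (cu*V + U*cv)^+2.
    have : (2*bu*bv)^+2 <= 4 * (U*cu)*(V*cv).
      rewrite exprMn [in X in X <= _]exprMn.
      have := ler_pM (sqr_ge0 bu) (sqr_ge0 bv) hbu hbv. nra.
    have := sqr_ge0 (cu*V - U*cv). nra.
  move=> h; have : 0 <= cu*V + U*cv by nra.
  move=> hp; case: (lerP (2*bu*bv) (cu*V+U*cv)) => // hlt; nra.
have e2 : U*cu <= be^+2 * (Nh*ch) by nra.
have e3 : V*cv <= al^+2 * (Nx*cx) by nra.
have e4 : cu*V <= (al*be) * (ch*Nx) by nra.
have e5 : U*cv <= (al*be) * (Nh*cx) by nra.
have hK0 : 0 <= K by nra.
have e6 : 2*al*be <= 3*(al^+2 + be^+2) by nra.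
have q1 : 0 <= Nh*ch by nra.
have q2 : 0 <= Nx*cx by nra.
have q3 : 0 <= ch*Nx by nra.
have q4 : 0 <= Nh*cx by nra.
have f1 : 3*be^+2*(Nh*ch) + 3*al^+2*(Nx*cx) + 3*(al*be)*(ch*Nx + Nh*cx) <= (3*be^+2+3*al^+2+al*be) * ((Nh+Nx)*(ch+cx)).
  have g0 : 0 <= 3*be^+2+3*al^+2-2*(al*be) by nra.
  have g1 := mulr_ge0 g0 (addr_ge0 q3 q4).
  have g2 := mulr_ge0 (mulr_ge0 al0 be0) (addr_ge0 q1 q2).
  have g3 := mulr_ge0 (sqr_ge0 al) q1.
  have g4 := mulr_ge0 (sqr_ge0 be) q2.
  have -> : (Nh+Nx)*(ch+cx) = Nh*ch + Nx*cx + (ch*Nx + Nh*cx) by ring.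
  lra.
have f2 : (3*be^+2+3*al^+2+al*be) * ((Nh+Nx)*(ch+cx)) <= K * ((Nh+Nx)*(ch+cx)) - (y2*be+al)*((Nh+Nx)*(ch+cx)).
  nra.
have f3 : y2*cu + cv <= (y2*be+al)*(ch+cx) + 0.
  have := ler_wpM2l y0 hcu. have := mulr_ge0 (mulr_ge0 y0 be0) cx0. have := mulr_ge0 al0 ch0. nra.
have f4 : (y2*be+al)*(ch+cx) <= K*(ch+cx).
  apply: ler_wpM2r; [lra| nra].
have f5 : 0 <= K*(bh+bx)^+2 by apply: mulr_ge0 => //; apply: sqr_ge0.
have f6 : 0 <= (y2*be+al)*((Nh+Nx)*(ch+cx)) by apply: mulr_ge0; [nra|apply: mulr_ge0; lra].
have hbu' : bu^+2 <= U*cu by [].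
nra.
Qed.

Section Main.
Variable R : rcfType.
Definition qd (a b c s : R) := a + 2*b*s + c*s^+2.
Definition gfun (K y2 aH bH cH aX bX cX aU bU cU aV bV cV s : R) :=
  let rho := qd aH bH cH s + qd aX bX cX s in
  let U := qd aU bU cU s in let V := qd aV bV cV s in
  K * (4^-1 * rho^+2 + 2^-1 * rho) - (4^-1*U^+2 + 4^-1*V^+2 + 2^-1*(U*V + y2*U + V + y2)).
Definition pfun (K y2 aH bH cH aX bX cX aU bU cU aV bV cV s : R) :=
  let rho := qd aH bH cH s + qd aX bX cX s in
  let brho := (bH + cH*s) + (bX + cX*s) in let crho := cH + cX in
  let U := qd aU bU cU s in let V := qd aV bV cV s in
  let bUs := bU + cU*s in let bVs := bV + cV*s in
  K*(brho^+2 + rho*crho/2 + crho/2) - (bUs^+2 + U*cU/2 + bVs^+2 + V*cV/2 + (cU*V + U*cV)/2 + 2*bUs*bVs + y2*cU/2 + cV/2).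

Lemma ident K y2 aH bH cH aX bX cX aU bU cU aV bV cV (t : R) : 0 <= t ->
  let g := gfun K y2 aH bH cH aX bX cX aU bU cU aV bV cV in
  let p := pfun K y2 aH bH cH aX bX cX aU bU cU aV bV cV in
  let s2 := (1+t+t^+2)/(2*(1+t)) in let w := 2*(1+t)^+2/(3*(1+t+t^+2)) in
  t * g 1 + (1-t) * g 0 - g t = t*(1-t)*((1-w)* p 0 + w* p s2).
Proof.
move=> t0 g p s2 w; rewrite /g /p /s2 /w /gfun /pfun /qd.
have h1 : 1 + t != 0 by apply/lt0r_neq0; lra.
have h2 : 1 + t + t^+2 != 0 by apply/lt0r_neq0; nra.
field; rewrite ?h1 ?h2 //=.
Qed.


Lemma pfun_ge0 (K y2 al be aH bH cH aX bX cX aU bU cU aV bV cV s : R) :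
 (forall s, 0 <= qd aH bH cH s) -> (forall s, 0 <= qd aX bX cX s) -> 0 <= cH -> 0 <= cX ->
 (forall s, 0 <= qd aU bU cU s) -> (forall s, 0 <= qd aV bV cV s) -> 0 <= cU -> 0 <= cV ->
 (forall s, qd aU bU cU s <= be * qd aH bH cH s) -> (forall s, qd aV bV cV s <= al * qd aX bX cX s) ->
 cU <= be * cH -> cV <= al * cX -> bU^+2 <= aU*cU -> bV^+2 <= aV*cV ->
 0 <= al -> 0 <= be -> 0 <= y2 -> 3*be^+2+3*al^+2+al*be+y2*be+al <= K ->
 0 <= pfun K y2 aH bH cH aX bX cX aU bU cU aV bV cV s.
Proof.
move=> H0 X0 cH0 cX0 U0 V0 cU0 cV0 hU hV hcU hcV hbU hbV al0 be0 y0 hK.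
rewrite /pfun.
apply: (@hess R K y2 al be) => //.
- have -> : (bU + cU*s)^+2 = bU^+2 + (2*bU*s + cU*s^+2)*cU by ring.
  rewrite /qd; have -> : (aU + 2 * bU * s + cU * s ^+ 2) * cU = aU*cU + (2*bU*s + cU*s^+2)*cU by ring.
  lra.
- have -> : (bV + cV*s)^+2 = bV^+2 + (2*bV*s + cV*s^+2)*cV by ring.
  rewrite /qd; have -> : (aV + 2 * bV * s + cV * s ^+ 2) * cV = aV*cV + (2*bV*s + cV*s^+2)*cV by ring.
  lra.
Qed.

Lemma key (K y2 al be aH bH cH aX bX cX aU bU cU aV bV cV t : R) :
 (forall s, 0 <= qd aH bH cH s) -> (forall s, 0 <= qd aX bX cX s) -> 0 <= cH -> 0 <= cX ->
 (forall s, 0 <= qd aU bU cU s) -> (forall s, 0 <= qd aV bV cV s) -> 0 <= cU -> 0 <= cV ->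
 (forall s, qd aU bU cU s <= be * qd aH bH cH s) -> (forall s, qd aV bV cV s <= al * qd aX bX cX s) ->
 cU <= be * cH -> cV <= al * cX -> bU^+2 <= aU*cU -> bV^+2 <= aV*cV ->
 0 <= al -> 0 <= be -> 0 <= y2 -> 3*be^+2+3*al^+2+al*be+y2*be+al <= K ->
 0 <= t -> t <= 1 ->
 gfun K y2 aH bH cH aX bX cX aU bU cU aV bV cV t <=
   t * gfun K y2 aH bH cH aX bX cX aU bU cU aV bV cV 1 + (1-t) * gfun K y2 aH bH cH aX bX cX aU bU cU aV bV cV 0.
Proof.
move=> H0 X0 cH0 cX0 U0 V0 cU0 cV0 hU hV hcU hcV hbU hbV al0 be0 y0 hK t0 t1.
rewrite -subr_ge0 (ident K y2 aH bH cH aX bX cX aU bU cU aV bV cV t t0) /=.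
set s2 := (1+t+t^+2)/(2*(1+t)).
have P s := @pfun_ge0 K y2 al be aH bH cH aX bX cX aU bU cU aV bV cV s H0 X0 cH0 cX0 U0 V0 cU0 cV0 hU hV hcU hcV hbU hbV al0 be0 y0 hK.
apply: mulr_ge0; first by apply: mulr_ge0; lra.
have hd : 0 < 3*(1+t+t^+2) by nra.
have w0 : 0 <= 2*(1+t)^+2/(3*(1+t+t^+2)) by apply: divr_ge0; [nra|lra].
have w1 : 2*(1+t)^+2/(3*(1+t+t^+2)) <= 1 by rewrite ler_pdivrMr //; nra.
apply: addr_ge0; apply: mulr_ge0 => //; lra.
Qed.


Lemma ReD (u v : R[i]) : complex.Re (u + v) = complex.Re u + complex.Re v.
Proof. by case: u; case: v. Qed.
Lemma ImD (u v : R[i]) : complex.Im (u + v) = complex.Im u + complex.Im v.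
Proof. by case: u; case: v. Qed.
Lemma Re0 : complex.Re (0 : R[i]) = 0. Proof. by []. Qed.
Lemma Im0 : complex.Im (0 : R[i]) = 0. Proof. by []. Qed.
Lemma ReMr (u : R[i]) (r : R) : complex.Re (u * r%:C) = complex.Re u * r.
Proof. case: u => a b /=. ring. Qed.
Lemma ImMr (u : R[i]) (r : R) : complex.Im (u * r%:C) = complex.Im u * r.
Proof. case: u => a b /=. ring. Qed.

Lemma abs2M (u v : R[i]) : abs2 (u * v) = abs2 u * abs2 v.
Proof. case: u => a b; case: v => c d; rewrite /abs2 /=. ring. Qed.

Lemma abs2_ge0 (u : R[i]) : 0 <= abs2 u.
Proof. by rewrite /abs2 addr_ge0 // sqr_ge0. Qed.

Lemma abs2_conj (u : R[i]) : abs2 (conjc u) = abs2 u.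
Proof. case: u => a b; rewrite /abs2 /=. ring. Qed.

Definition bcross (u v : R[i]) := complex.Re u * complex.Re v + complex.Im u * complex.Im v.

Lemma abs2_lin (u d : R[i]) (s : R) :
  abs2 (u + s%:C * d) = abs2 u + 2 * bcross u d * s + abs2 d * s ^+ 2.
Proof. case: u => a b; case: d => c e; rewrite /abs2 /bcross /=. ring. Qed.

Lemma bcross_cs (u d : R[i]) : (bcross u d) ^+ 2 <= abs2 u * abs2 d.
Proof.
case: u => a b; case: d => c e; rewrite /abs2 /bcross /=.
have := sqr_ge0 (a*e - b*c). nra.
Qed.

Lemma CS n (a b : 'I_n -> R) :
  (\sum_k a k * b k) ^+ 2 <= (\sum_k a k ^+ 2) * (\sum_k b k ^+ 2).
Proof.
have E : \sum_k \sum_l (a k * b l - a l * b k) ^+ 2 =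
   2 * ((\sum_k a k ^+ 2) * (\sum_k b k ^+ 2) - (\sum_k a k * b k) ^+ 2).
  have e1 : forall k l, (a k * b l - a l * b k) ^+ 2 =
     a k ^+2 * b l ^+ 2 + a l ^+ 2 * b k ^+ 2 - 2 * ((a k * b k) * (a l * b l)).
    by move=> k l; ring.
  under eq_bigr do under eq_bigr do rewrite e1.
  under eq_bigr do rewrite sumrB big_split /=.
  rewrite sumrB big_split /=.
  rewrite -[\sum_k \sum_l 2 * _]/(\sum_k \sum_l 2 * ((a k * b k) * (a l * b l))).
  have -> : \sum_k \sum_l a k ^+ 2 * b l ^+ 2 = (\sum_k a k ^+ 2) * (\sum_k b k ^+ 2).
    by rewrite mulr_suml; apply: eq_bigr => k _; rewrite mulr_sumr.
  have -> : \sum_k \sum_l a l ^+ 2 * b k ^+ 2 = (\sum_k a k ^+ 2) * (\sum_k b k ^+ 2).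
    by rewrite mulrC mulr_suml; apply: eq_bigr => k _; rewrite mulr_sumr; apply: eq_bigr => l _; rewrite mulrC.
  have -> : \sum_k \sum_l 2 * ((a k * b k) * (a l * b l)) = 2 * (\sum_k a k * b k) ^+ 2.
    rewrite expr2 mulr_suml mulr_sumr; apply: eq_bigr => k _.
    rewrite mulr_sumr mulr_sumr; apply: eq_bigr => l _; ring.
  ring.
have : 0 <= \sum_k \sum_l (a k * b l - a l * b k) ^+ 2.
  by apply: sumr_ge0 => k _; apply: sumr_ge0 => l _; apply: sqr_ge0.
rewrite E. lra.
Qed.

Lemma embed_lin n (h dh : 'cV[R]_n) (s : R) : embed (h + s *: dh) = embed h + s%:C *: embed dh.
Proof. apply/matrixP => i j; rewrite !mxE /=. by rewrite rmorphD rmorphM. Qed.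

Lemma uc_lin m n (B : 'M[R[i]]_(m,n)) (h dh : 'cV[R]_n) (s : R) j :
  (B *m embed (h + s*:dh)) j 0 = (B *m embed h) j 0 + s%:C * (B *m embed dh) j 0.
Proof. by rewrite embed_lin mulmxDr -scalemxAr !mxE. Qed.

Definition rdot {n} (h dh : 'cV[R]_n) := \sum_k h k 0 * dh k 0.

Lemma rnorm2_lin n (h dh : 'cV[R]_n) (s : R) :
  rnorm2 (h + s*:dh) = rnorm2 h + 2 * rdot h dh * s + rnorm2 dh * s^+2.
Proof.
rewrite /rnorm2 /rdot mulr_sumr mulr_suml mulr_suml -!big_split /=.
by apply: eq_bigr => k _; rewrite !mxE; ring.
Qed.

Lemma rnorm2_ge0 n (h : 'cV[R]_n) : 0 <= rnorm2 h.
Proof. by apply: sumr_ge0 => k _; apply: sqr_ge0. Qed.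

Lemma cnorm2_ge0 n (h : 'cV[R[i]]_n) : 0 <= cnorm2 h.
Proof. by apply: sumr_ge0 => k _; apply: abs2_ge0. Qed.

Lemma cs_mat m n (B : 'M[R[i]]_(m,n)) (g : 'cV[R]_n) j :
  abs2 ((B *m embed g) j 0) <= cnorm2 (col j (adjoint B)) * rnorm2 g.
Proof.
have e : (B *m embed g) j 0 = \sum_k B j k * (g k 0)%:C.
  by rewrite mxE; apply: eq_bigr => k _; rewrite mxE.
have eRe : complex.Re ((B *m embed g) j 0) = \sum_k complex.Re (B j k) * g k 0.
  by rewrite e (big_morph _ ReD Re0); apply: eq_bigr => k _; rewrite ReMr.
have eIm : complex.Im ((B *m embed g) j 0) = \sum_k complex.Im (B j k) * g k 0.
  by rewrite e (big_morph _ ImD Im0); apply: eq_bigr => k _; rewrite ImMr.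
have eb : cnorm2 (col j (adjoint B)) = \sum_k abs2 (B j k).
  by rewrite /cnorm2; apply: eq_bigr => k _; rewrite !mxE abs2_conj.
rewrite eb /abs2 eRe eIm /rnorm2 big_split mulrDl /=.
by apply: lerD; apply: CS.
Qed.

Definition Lj {m d1 d2} (B : 'M[R[i]]_(m, d1)) (A : 'M[R[i]]_(m, d2)) (y : 'cV[R[i]]_m) (j : 'I_m) :=
  3 * (cnorm2 (col j (adjoint B))) ^+ 2 + 3 * (cnorm2 (col j (adjoint A))) ^+ 2
      + cnorm2 (col j (adjoint B)) * cnorm2 (col j (adjoint A))
      + abs2 (y j 0) * cnorm2 (col j (adjoint B))
      + cnorm2 (col j (adjoint A)).

Lemma F1E m d1 d2 (B : 'M[R[i]]_(m, d1)) (A : 'M[R[i]]_(m, d2)) (y : 'cV[R[i]]_m) h x :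
  F1 B A y h x = \sum_(j < m) (4^-1 * (abs2 ((B *m embed h) j 0))^+2 + 4^-1 * (abs2 ((A *m embed x) j 0))^+2
     + 2^-1 * (abs2 ((B *m embed h) j 0) * abs2 ((A *m embed x) j 0) + abs2 (y j 0) * abs2 ((B *m embed h) j 0)
               + abs2 ((A *m embed x) j 0) + abs2 (y j 0))).
Proof.
rewrite /F1 /cnorm4 /cnorm2 /hadamard.
under [\sum_(j < m) abs2 ((\col__ _) j 0)]eq_bigr do rewrite mxE abs2M.
under [\sum_(j < m) abs2 ((\col__ _) j 0)]eq_bigr do rewrite mxE abs2M.
rewrite !big_split /= -!mulr_sumr !big_split /=.
done.
Qed.

Lemma Gsplit m d1 d2 (B : 'M[R[i]]_(m, d1)) (A : 'M[R[i]]_(m, d2)) (y : 'cV[R[i]]_m) (L : R)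
  (h2 dh : 'cV[R]_d1) (x2 dx : 'cV[R]_d2) (s : R) :
  L * Hfun (h2 + s*:dh) (x2 + s*:dx) - F1 B A y (h2 + s*:dh) (x2 + s*:dx) =
  \sum_j gfun (Lj B A y j) (abs2 (y j 0)) (rnorm2 h2) (rdot h2 dh) (rnorm2 dh) (rnorm2 x2) (rdot x2 dx) (rnorm2 dx)
     (abs2 ((B *m embed h2) j 0)) (bcross ((B *m embed h2) j 0) ((B *m embed dh) j 0)) (abs2 ((B *m embed dh) j 0))
     (abs2 ((A *m embed x2) j 0)) (bcross ((A *m embed x2) j 0) ((A *m embed dx) j 0)) (abs2 ((A *m embed dx) j 0)) s
  + gfun (L - \sum_j Lj B A y j) 0 (rnorm2 h2) (rdot h2 dh) (rnorm2 dh) (rnorm2 x2) (rdot x2 dx) (rnorm2 dx)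
     0 0 0 0 0 0 s.
Proof.
rewrite F1E /Hfun !rnorm2_lin.
under eq_bigr do rewrite !uc_lin !abs2_lin.
rewrite /gfun /qd /=.
rewrite sumrB -mulr_suml.
set S := \sum_(i < m) _.
set T := \sum_(i < m) _.
ring.
Qed.
Lemma comb (a b c d e f t : R) : a <= t*b + (1-t)*c -> d <= t*e + (1-t)*f ->
  a + d <= t*(b+e) + (1-t)*(c+f).
Proof. move=> h1 h2; have -> : t*(b+e) + (1-t)*(c+f) = (t*b + (1-t)*c) + (t*e + (1-t)*f) by ring.
exact: lerD. Qed.

Lemma sum_comb m (a b c : 'I_m -> R) (t : R) : (forall j, a j <= t * b j + (1-t) * c j) ->
  \sum_j a j <= t * \sum_j b j + (1-t) * \sum_j c j.
Proof. move=> H; rewrite !mulr_sumr -big_split; apply: ler_sum => j _; exact: H. Qed.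
End Main.

Theorem theorem1 (R : rcfType) (m d1 d2 : nat)
  (hm : (0 < m)%N) (hd1 : (0 < d1)%N) (hd2 : (0 < d2)%N)
  (B : 'M[R[i]]_(m, d1)) (A : 'M[R[i]]_(m, d2)) (y : 'cV[R[i]]_m) (L : R) :
  \sum_(j < m)
     (3 * (cnorm2 (col j (adjoint B))) ^+ 2 + 3 * (cnorm2 (col j (adjoint A))) ^+ 2
      + cnorm2 (col j (adjoint B)) * cnorm2 (col j (adjoint A))
      + abs2 (y j 0) * cnorm2 (col j (adjoint B))
      + cnorm2 (col j (adjoint A))) <= L ->
  convex_on_pairs (fun (h : 'cV[R]_d1) (x : 'cV[R]_d2) => L * Hfun h x - F1 B A y h x).
Proof.
move=> hL h1 h2 x1 x2 t t0 t1 /=.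
have hL' : \sum_j @Lj R _ _ _ B A y j <= L := hL.
set dh := h1 - h2; set dx := x1 - x2.
have Et : t *: h1 + (1 - t) *: h2 = h2 + t *: dh by apply/matrixP => i j; rewrite !mxE; ring.
have Ex : t *: x1 + (1 - t) *: x2 = x2 + t *: dx by apply/matrixP => i j; rewrite !mxE; ring.
have e1 : h2 + dh = h1 by rewrite /dh addrC subrK.
have f1 : x2 + dx = x1 by rewrite /dx addrC subrK.
have G1 := @Gsplit R _ _ _ B A y L h2 dh x2 dx 1.
rewrite !scale1r e1 f1 in G1.
have G0 := @Gsplit R _ _ _ B A y L h2 dh x2 dx 0.
rewrite !scale0r !addr0 in G0.
rewrite Et Ex Gsplit G1 G0.
apply: comb.
  apply: sum_comb => j.
  apply: (@key R _ _ (cnorm2 (col j (adjoint A))) (cnorm2 (col j (adjoint B)))) => //.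
  - by move=> s; rewrite /qd -rnorm2_lin; apply: rnorm2_ge0.
  - by move=> s; rewrite /qd -rnorm2_lin; apply: rnorm2_ge0.
  - exact: rnorm2_ge0.
  - exact: rnorm2_ge0.
  - by move=> s; rewrite /qd -abs2_lin; apply: abs2_ge0.
  - by move=> s; rewrite /qd -abs2_lin; apply: abs2_ge0.
  - exact: abs2_ge0.
  - exact: abs2_ge0.
  - by move=> s; rewrite /qd -abs2_lin -rnorm2_lin -uc_lin; apply: cs_mat.
  - by move=> s; rewrite /qd -abs2_lin -rnorm2_lin -uc_lin; apply: cs_mat.
  - exact: cs_mat.
  - exact: cs_mat.
  - exact: bcross_cs.
  - exact: bcross_cs.
  - exact: cnorm2_ge0.
  - exact: cnorm2_ge0.
  - exact: abs2_ge0.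
  - rewrite /Lj; nra.
apply: (@key R _ _ 0 0) => //.
all: first [ by move=> s; rewrite /qd -rnorm2_lin; apply: rnorm2_ge0 | exact: rnorm2_ge0
           | by move=> s; rewrite /qd; lra | lra ].
Qed.
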